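(* Let $a>0$, $b,d,b',d'\in\mathbb{C}$ with positive real parts, $b+d=b'+d'$, $\bar d=b$, $\bar d'=b'$, let $x,y\in\mathbb{R}$ and $k\in\mathbb{Z}_+$. Then $$\sum_{j=0}^k\frac{(-k)_j(2a+b+d)_{2j}\,j!}{(2a)_j(b+d)_j(2a+b+d+j-1)_j(a+d)_j(a+d')_j(2a+b+d+k)_j}\,p_j(x;a,b,a,d)\,p_j(y;a,b',a,d')$$ $$=\frac{(d-ix)_k(d'-iy)_k(2a+b+d)_k}{(a+d)_k(a+d')_k(b+d)_k}\,{}_4F_3\!\left({-k,\ 1-k-b-d,\ a+ix,\ a+iy\atop 2a,\ 1-k-d+ix,\ 1-k-d'+iy};1\right).$$
   Context: Continuous Hahn polynomials: $p_n(x;a,b,c,d)=i^n\frac{(a+c)_n(a+d)_n}{n!}\,{}_3F_2\!\left({-n,\ n+a+b+c+d-1,\ a+ix\atop a+c,\ a+d};1\right)$; $(\alpha)_n$ is the Pochhammer symbol. *)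

(* Defs.v *)
From HB Require Import structures.
From mathcomp Require Import all_boot all_order all_algebra.
From mathcomp Require Import complex.
Set Implicit Arguments. Unset Strict Implicit. Unset Printing Implicit Defensive.
Import Order.TTheory GRing.Theory Num.Theory.
Local Open Scope ring_scope.

Definition poch {C : nzRingType} (x : C) (n : nat) : C :=
  \prod_(i < n) (x + i%:R).

Definition hyp_term {C : fieldType} (num den : seq C) (z : C) (j : nat) : C :=
  (\prod_(a <- num) poch a j) / (\prod_(b <- den) poch b j) * z ^+ j / (j`!)%:R.

(* Terminating hypergeometric series whose first numerator parameter is -n:
   pFq(-n, num; den; z) = sum_{j=0}^{n} (all later terms vanish since (-n)_j = 0 for j > n). *)
Definition hypT {C : fieldType} (n : nat) (num den : seq C) (z : C) : C :=
  \sum_(j < n.+1) hyp_term (- n%:R :: num) den z j.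

Definition cHahn {R : rcfType} (n : nat) (x : R) (a b c d : R[i]) : R[i] :=
  (Complex 0 1 : R[i]) ^+ n * poch (a + c) n * poch (a + d) n / (n`!)%:R *
  hypT n [:: (n%:R + a + b + c + d - 1); a + (Complex 0 1 : R[i]) * (real_complex R x)]
         [:: a + c; a + d] 1.

Definition iC {R : rcfType} : R[i] := Complex 0 1.

(* Main.v *)
Require Import Defs.
From HB Require Import structures.
From mathcomp Require Import all_boot all_order all_algebra.
From mathcomp Require Import complex.
From mathcomp Require Import ring.
Import Order.TTheory GRing.Theory Num.Theory.
Local Open Scope ring_scope.
Local Open Scope complex_scope.
Local Close Scope complex_scope.

Section Poch.
Context {C : numFieldType}.
Implicit Types (x : C).

Lemma poch0 x : poch x 0 = 1.
Proof. by rewrite /poch big_ord0. Qed.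

Lemma pochS x n : poch x n.+1 = poch x n * (x + n%:R).
Proof. by rewrite /poch big_ord_recr. Qed.

Lemma pochSl x n : poch x n.+1 = x * poch (x + 1) n.
Proof.
rewrite /poch big_ord_recl addr0; congr (_ * _); apply: eq_bigr => i _.
by rewrite /bump /= natrD addrA.
Qed.

Lemma poch_add x m n : poch x (m + n) = poch x m * poch (x + m%:R) n.
Proof.
elim: n => [|n IH]; first by rewrite addn0 poch0 mulr1.
by rewrite addnS !pochS IH natrD addrA mulrA.
Qed.

Lemma poch_negnat (j n : nat) : (j < n)%N -> poch (- j%:R : C) n = 0.
Proof.
move=> ljn; rewrite /poch (bigD1 (Ordinal ljn)) //= addNr mul0r //.
Qed.

Lemma poch_neq0 {x} n : (forall i : nat, x + i%:R != 0) -> poch x n != 0.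
Proof.
move=> h; elim: n => [|n IH]; first by rewrite poch0 oner_eq0.
by rewrite pochS mulf_neq0.
Qed.

Lemma natr_neq0 (n : nat) : (n.+1%:R : C) != 0.
Proof. by rewrite pnatr_eq0. Qed.

Lemma fact_neq0 (n : nat) : (n`!%:R : C) != 0.
Proof. by rewrite pnatr_eq0 -lt0n fact_gt0. Qed.

End Poch.

Ltac gen_poch := repeat match goal with |- context [poch ?x ?n] => let P := fresh "P" in set P := poch x n end.

Section S1.
Variable C : numFieldType.
Variables al t : C.
Hypothesis hal : forall i : nat, al + i%:R != 0.
Hypothesis ht : forall i : nat, t + i%:R != 0.
Hypothesis hta : forall i : nat, t - al + i%:R != 0.

Definition ee (n j : nat) : C := poch (- j%:R) n * poch (t + j%:R - 1) n.
Definition mu (p : nat) : C := p%:R * (p%:R + t - 1).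
Definition ww (k j : nat) : C :=
  (-1) ^+ j * poch (- k%:R) j * poch t (2 * j) * poch al j /
  (poch (t - al) j * poch (t + j%:R - 1) j * poch (t + k%:R) j * (j`!)%:R).

Lemma ee_S n j : ee n.+1 j = ee n j * (mu n - mu j).
Proof. rewrite /ee /mu !pochS; ring. Qed.

Lemma ee0 j : ee 0 j = 1.
Proof. by rewrite /ee !poch0 mulr1. Qed.

Lemma ee_zero n j : (j < n)%N -> ee n j = 0.
Proof. by move=> h; rewrite /ee poch_negnat // mul0r. Qed.

Lemma ht' (j i : nat) : t + j%:R + i%:R != 0.
Proof. by rewrite -addrA -natrD. Qed.

Lemma ht1 (j : nat) : poch (t + j%:R - 1) j != 0.
Proof.
case: j => [|j]; first by rewrite poch0 oner_eq0.
apply: poch_neq0 => i; have -> : t + j.+1%:R - 1 + i%:R = t + (j + i)%:R.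
  by rewrite natrD; ring.
exact: ht.
Qed.

Lemma ww_rec k j : ww k.+1 j * (mu k.+1 - mu j) = mu k.+1 * ww k j.
Proof.
case: j => [|j].
  rewrite /ww /mu !poch0 expr0 fact0; ring.
rewrite /ww (pochSl (- k.+1%:R)) (pochS (- k%:R)).
have -> : (- (k.+1)%:R + 1 : C) = - k%:R by ring.
rewrite (pochS (t + k.+1%:R)) (pochSl (t + k%:R)).
have -> : t + k%:R + 1 = t + k.+1%:R by rewrite -natr1 addrA.
have h1 := poch_neq0 j.+1 hta.
have h2 := ht1 j.+1.
have h3 : poch (t + k.+1%:R) j != 0 by apply: poch_neq0; exact: ht'.
have h4 : t + k.+1%:R + j%:R != 0 := ht' _ _.
have h5 : t + k%:R != 0 := ht _.
have h6 := @fact_neq0 C j.+1.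
rewrite /mu. set P1 := poch (- k%:R) j. set P2 := poch t _. set P3 := poch al _. set P4 := poch (t - al) _.
set P5 := poch (t + j.+1%:R - 1) _. set P6 := poch (t + k.+1%:R) j. set F := (j.+1)`!%:R. Show. field.
by rewrite !nat1r; repeat (apply/andP; split).
Qed.


Definition GG (k n p : nat) : C := \sum_(j < k.+1) ww k j * ee n j * ee p j.
Definition TT (k : nat) : C := poch t k / poch (t - al) k.
Definition FF (k n : nat) : C := TT k * poch al n * poch (- k%:R) n.

Lemma poch_negself (K : nat) : poch (- K%:R : C) K = (-1) ^+ K * K`!%:R.
Proof.
elim: K => [|K IH]; first by rewrite poch0 expr0 fact0 mulr1.
rewrite pochSl.
have -> : (- K.+1%:R + 1 : C) = - K%:R by rewrite -natr1; ring.
by rewrite IH factS natrM exprS; ring.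
Qed.

Lemma GG_R1 k n :
  (mu k.+1 - mu n) * GG k.+1 n 0 + GG k.+1 n.+1 0 = mu k.+1 * GG k n 0.
Proof.
rewrite /GG mulr_sumr -big_split /=.
rewrite (eq_bigr (fun j : 'I_k.+2 => mu k.+1 * (ww k j * ee n j * ee 0 j))); last first.
  move=> j _; rewrite !ee0 !mulr1 ee_S.
  have := ww_rec k j; move=> h.
  transitivity (ww k.+1 j * (mu k.+1 - mu j) * ee n j); first by ring.
  by rewrite h; ring.
rewrite big_ord_recr /= -mulr_sumr.
rewrite [X in _ + X](_ : _ = 0) ?addr0 //.
by rewrite /ww (@poch_negnat _ k k.+1) // !mulr0 !mul0r mulr0.
Qed.

Lemma FF_R2 k n :
  (mu k.+1 - mu n) * FF k.+1 n + FF k.+1 n.+1 = mu k.+1 * FF k n.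
Proof.
rewrite /FF /TT (pochS al n) (pochSl (- k.+1%:R)) (pochS t k) (pochS (t - al) k).
have -> : (- k.+1%:R + 1 : C) = - k%:R by rewrite -natr1; ring.
set Q := poch (- k.+1%:R) n.
have hQ : Q * (- k.+1%:R + n%:R) = - k.+1%:R * poch (- k%:R) n.
  rewrite /Q -pochS pochSl.
  by have -> : (- k.+1%:R + 1 : C) = - k%:R by rewrite -natr1; ring.
have h1 := @poch_neq0 _ _ k hta.
have h2 := hta k.
transitivity ((t + (k + n)%:R) * (poch t k * (t + k%:R)) / (poch (t - al) k * (t - al + k%:R)) * poch al n * (- (Q * (- k.+1%:R + n%:R)))
   + poch t k * (t + k%:R) / (poch (t - al) k * (t - al + k%:R)) * (poch al n * (al + n%:R)) * (- k.+1%:R * poch (- k%:R) n)).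
  rewrite /mu; rewrite natrD; gen_poch; ring.
rewrite hQ /mu; gen_poch; field.
by rewrite h1 h2.
Qed.


Lemma GG_top k : GG k k 0 = FF k k.
Proof.
case: k => [|k].
  by rewrite /GG /FF /TT big_ord_recr big_ord0 /ww /= !ee0 !poch0 expr0 fact0 !mulr1 !divr1 add0r.
rewrite /GG big_ord_recr /= big1; last first.
  by move=> j _; rewrite (ee_zero _ _ (ltn_ord j)) mulr0 mul0r.
rewrite add0r ee0 mulr1 /ww /ee /FF /TT.
rewrite poch_negself.
have -> : (2 * k.+1 = k.+1 + k.+1)%N by rewrite mul2n addnn.
rewrite poch_add.
have h1 := @poch_neq0 _ _ k.+1 hta.
have h2 := ht1 k.+1.
have h3 : poch (t + k.+1%:R) k.+1 != 0 by apply: poch_neq0; exact: ht'.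
have h4 := @fact_neq0 C k.+1.
have hs : ((-1) ^+ k.+1 * (-1) ^+ k.+1 : C) = 1.
  by rewrite -exprMn mulrNN mulr1 expr1n.
transitivity (((-1) ^+ k.+1 * (-1) ^+ k.+1) * ((-1) ^+ k.+1 * (k.+1)`!%:R * poch t k.+1 * poch al k.+1 / poch (t - al) k.+1)).
  gen_poch; field; by rewrite h1 h2 h3 h4.
rewrite hs; gen_poch; field; by rewrite h1.
Qed.

Lemma GG_zero k n p : (k < n)%N -> GG k n p = 0.
Proof.
move=> h; rewrite /GG big1 // => j _.
by rewrite (@ee_zero n j) ?mulr0 ?mul0r // (leq_trans _ h) // ltnS -ltnS.
Qed.

Lemma FF_zero k n : (k < n)%N -> FF k n = 0.
Proof. by move=> h; rewrite /FF poch_negnat // mulr0. Qed.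

Lemma S1 k n : GG k n 0 = FF k n.
Proof.
elim: k n => [|k IH] n.
  case: n => [|n]; first by rewrite GG_top.
  by rewrite GG_zero // FF_zero.
have hrec m : (mu k.+1 - mu m) * (GG k.+1 m 0 - FF k.+1 m) + (GG k.+1 m.+1 0 - FF k.+1 m.+1) = 0.
  transitivity (((mu k.+1 - mu m) * GG k.+1 m 0 + GG k.+1 m.+1 0) - ((mu k.+1 - mu m) * FF k.+1 m + FF k.+1 m.+1)).
    by ring.
  by rewrite GG_R1 FF_R2 IH subrr.
case: (ltnP k.+1 n) => hn.
  by rewrite GG_zero // FF_zero.
suff: forall i, (i <= k.+1)%N -> GG k.+1 (k.+1 - i) 0 - FF k.+1 (k.+1 - i) = 0.
  move/(_ (k.+1 - n)%N); rewrite leq_subr subKn //.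
  by move/(_ isT)/eqP; rewrite subr_eq0 => /eqP.
elim=> [|i IHi] hi; first by rewrite subn0 GG_top subrr.
have := hrec (k.+1 - i.+1)%N.
have -> : ((k.+1 - i.+1).+1 = k.+1 - i)%N by rewrite subnS prednK // subn_gt0.
rewrite IHi ?(ltnW hi) // addr0 => /eqP; rewrite mulf_eq0 => /orP [|/eqP //].
have en : (k.+1 - i.+1 + i.+1 = k.+1)%N by rewrite subnK.
move: en; set n0 := (k.+1 - i.+1)%N => en.
have ek : (k = n0 + i)%N by move: en; rewrite addnS => -[].
have -> : mu k.+1 - mu n0 = i.+1%:R * (t + (k + n0)%:R).
  rewrite /mu ek; ring.
by rewrite mulf_eq0 pnatr_eq0 /= (negbTE (ht _)).
Qed.

End S1.

Section S2.
Variable C : numFieldType.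
Variables al t : C.
Variable k : nat.

Definition vv (m p : nat) : C :=
  if (m <= p)%N then poch (m%:R - k%:R) (p - m) / (p - m)`!%:R else 0.
Definition hh (m p : nat) : C := poch al p * p`!%:R * vv m p.
Definition ap (m : nat) : C := - ((k%:R - m%:R) * (t - al + k%:R - m%:R - 1)).
Definition bp (m : nat) : C := (k%:R - m%:R) * (al + m%:R) + m%:R * (t - al + k%:R - m%:R).
Definition cp (m : nat) : C := - (m%:R * (al + m%:R - 1)).

Lemma vv_add m r : vv m (m + r) = poch (m%:R - k%:R) r / r`!%:R.
Proof. by rewrite /vv leq_addr addKn. Qed.

Lemma vv_diag m : vv m m = 1.
Proof. by rewrite /vv leqnn subnn poch0 fact0 divr1. Qed.

Lemma vv_lt m p : (p < m)%N -> vv m p = 0.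
Proof. by rewrite /vv ltnNge => /negbTE ->. Qed.

Lemma hh_rec m p :
  hh m p.+1 = (@mu C t p - bp m) * hh m p - ap m * hh m.+1 p - cp m * hh m.-1 p.
Proof.
rewrite /hh (pochS al p) factS natrM.
have [hmp|hmp] := leqP m p; last first.
  rewrite (vv_lt _ _ hmp) (@vv_lt m.+1 p); last by rewrite ltnS ltnW.
  case: (ltngtP p.+1 m) => h.
  - have h' : (p < m.-1)%N by case: m h {hmp}.
    rewrite (vv_lt _ _ h) (vv_lt _ _ h'); gen_poch; ring.
  - by move: h; rewrite ltnS leqNgt hmp.
  - rewrite -h /= !vv_diag /cp /mu; gen_poch; ring.
have [r ->] : exists r, p = (m + r)%N by exists (p - m)%N; rewrite subnKC.
rewrite -addnS !vv_add; clear hmp.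
case: r => [|r].
  rewrite addn0 (@vv_lt m.+1 m) //.
  case: m => [|m].
    rewrite /cp /bp /ap /mu !poch0 pochS poch0 fact0 factS /=.
    rewrite !fact0 /=; gen_poch. ring.
  rewrite /= -[X in vv m X]addn1 vv_add.
  rewrite !pochS !poch0 /cp /bp /ap /mu !factS !fact0.
  rewrite /=; gen_poch; field; done.
have e3 : vv m.+1 (m + r.+1) = poch (m%:R - k%:R + 1) r / r`!%:R.
  by rewrite -addSnnS vv_add -natr1 addrAC.
rewrite e3.
have e1 : poch (m%:R - k%:R) r.+2 = (m%:R - k%:R) * poch (m%:R - k%:R + 1) r * (m%:R - k%:R + 1 + r%:R) :> C.
  by rewrite pochSl pochS mulrA.
have e2 : poch (m%:R - k%:R) r.+1 = (m%:R - k%:R) * poch (m%:R - k%:R + 1) r :> C.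
  by rewrite pochSl.
rewrite e1 e2 !factS !natrM.
have hr := @fact_neq0 C r.
have hr1 := @natr_neq0 C r.
have hr2 := @natr_neq0 C r.+1.
have hr1' : (1 + r%:R : C) != 0 by rewrite nat1r.
have hr2' : (2 + r%:R : C) != 0.
  by rewrite (_ : 2 + r%:R = r.+2%:R) ?natr_neq0 //; ring.
case: m e1 e2 e3 => [|m] _ _ _.
  rewrite /cp /bp /ap /mu; gen_poch; field.
  by rewrite hr hr1' hr2'.
have e4 : vv m (m.+1 + r.+1) = (m%:R - k%:R) * (m%:R - k%:R + 1) * poch (m.+1%:R - k%:R + 1) r / (r.+2 * (r.+1 * r`!))%:R.
  rewrite addSnnS vv_add pochSl pochSl !factS mulrA.
  by have -> : m%:R - k%:R + 1 + 1 = m.+1%:R - k%:R + 1 :> C by rewrite -natr1; ring.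
rewrite /= e4 !natrM.
rewrite /cp /bp /ap /mu; gen_poch; field.
by rewrite hr hr1' hr2'.
Qed.

Hypothesis hal : forall i : nat, al + i%:R != 0.

Definition bb (m : nat) : C :=
  poch (- k%:R) m * poch (1 - k%:R - t + al) m / (poch al m * m`!%:R).

Lemma bb_rel m : bb m.+1 * cp m.+1 = bb m * ap m.
Proof.
rewrite /bb !pochS factS natrM /cp /ap.
have h1 := @poch_neq0 _ _ m hal.
have h2 := hal m.
have h3 := @fact_neq0 C m.
have h4 := @natr_neq0 C m.
gen_poch; field.
by rewrite h1 h2 h3 nat1r h4.
Qed.

Definition DD (n p m : nat) : C := hh m n * hh m.+1 p - hh m.+1 n * hh m p.

Lemma sum_key n p :
  \sum_(m < k.+1) bb m * hh m n * hh m p.+1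
  - \sum_(m < k.+1) bb m * hh m n.+1 * hh m p
  - (@mu C t p - @mu C t n) * \sum_(m < k.+1) bb m * hh m n * hh m p = 0.
Proof.
rewrite mulr_sumr -!sumrB.
rewrite (eq_bigr (fun m : 'I_k.+1 => bb m * cp m * DD n p m.-1 - bb m * ap m * DD n p m)); last first.
  move=> m _; rewrite !hh_rec /DD.
  case: (nat_of_ord m) => [|m'] /=.
    rewrite /cp; ring.
  ring.
rewrite sumrB big_ord_recl big_ord_recr /=.
have -> : cp 0 = 0 by rewrite /cp mul0r oppr0.
have -> : ap k = 0 by rewrite /ap subrr mul0r oppr0.
rewrite (eq_bigr (fun m : 'I_k => bb m * ap m * DD n p m)); last first.
  by move=> m _; rewrite /bump /= bb_rel.
set S := \sum_(i < k) _.
ring.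
Qed.

Definition HH (n p : nat) : C := @TT C al t k * \sum_(m < k.+1) bb m * hh m n * hh m p.

Lemma HH_rec n p : HH n p.+1 = HH n.+1 p + (@mu C t p - @mu C t n) * HH n p.
Proof.
have := sum_key n p; rewrite /HH.
set S1 := \sum_(m < k.+1) _. set S2 := \sum_(m < k.+1) _. set S3 := \sum_(m < k.+1) _.
move=> /eqP; rewrite !subr_eq add0r => /eqP ->; ring.
Qed.

End S2.

Section GH.
Variable C : numFieldType.
Variables al t : C.
Hypothesis hal : forall i : nat, al + i%:R != 0.
Hypothesis ht : forall i : nat, t + i%:R != 0.
Hypothesis hta : forall i : nat, t - al + i%:R != 0.
Variable k : nat.

Lemma GG_rec n p : @GG C al t k n p.+1 = @GG C al t k n.+1 p + (@mu C t p - @mu C t n) * @GG C al t k n p.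
Proof.
rewrite /GG mulr_sumr -big_split /=; apply: eq_bigr => j _.
rewrite !ee_S; ring.
Qed.

Lemma HH0 n : @HH C al t k n 0 = @FF C al t k n.
Proof.
rewrite /HH big_ord_recl big1; last first.
  move=> i _; rewrite /hh /vv /=; ring.
have e : vv C k 0 n = poch (0%:R - k%:R) n / n`!%:R by rewrite -{1}[n]add0n vv_add.
rewrite /hh /bb /FF /= e !poch0 fact0 sub0r.
have h := @fact_neq0 C n.
rewrite vv_diag addr0; gen_poch; field; by rewrite h.
Qed.

Lemma GH p n : @GG C al t k n p = @HH C al t k n p.
Proof.
elim: p n => [|p IH] n.
  by rewrite S1 // HH0.
by rewrite GG_rec HH_rec // !IH.
Qed.
End GH.

Section Vand.
Variable C : numFieldType.

Lemma pascal (N r : nat) :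
  poch (- N.+1%:R : C) r.+1 / (r.+1)`!%:R
  = poch (- N%:R) r.+1 / (r.+1)`!%:R - poch (- N%:R) r / r`!%:R.
Proof.
rewrite pochSl (pochS (- N%:R)) factS natrM.
have -> : (- N.+1%:R + 1 : C) = - N%:R by rewrite -natr1; ring.
have h1 := @natr_neq0 C r. have h2 := @fact_neq0 C r.
gen_poch; field. by rewrite h2 nat1r h1.
Qed.

Lemma vandermonde (N : nat) (s X : C) :
  poch (s - X) N =
  \sum_(r < N.+1) poch (- N%:R) r / r`!%:R * poch X r * poch (s + r%:R) (N - r).
Proof.
elim: N s => [|N IH] s.
  by rewrite big_ord_recl big_ord0 /= !poch0 fact0 divr1 !mulr1 addr0.
rewrite pochSl (_ : s - X + 1 = (s + 1) - X); last by ring.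
rewrite IH mulr_sumr.
rewrite [RHS]big_ord_recl /=.
rewrite [in RHS](eq_bigr (fun r : 'I_N.+1 =>
   poch (- N%:R) r.+1 / (r.+1)`!%:R * poch X r.+1 * poch (s + r.+1%:R) (N.+1 - r.+1)
   - poch (- N%:R) r / r`!%:R * poch X r.+1 * poch (s + r.+1%:R) (N.+1 - r.+1))); last first.
  by move=> r _; rewrite /bump /= pascal mulrBl mulrBl.
rewrite sumrB addrA.
have -> : poch (- N.+1%:R) 0 / 0`!%:R * poch X 0 * poch (s + 0%:R) (N.+1 - 0)
   + \sum_(i < N.+1) poch (- N%:R) i.+1 / (i.+1)`!%:R * poch X i.+1 * poch (s + i.+1%:R) (N.+1 - i.+1)
   = \sum_(i < N.+2) poch (- N%:R) i / i`!%:R * poch X i * poch (s + i%:R) (N.+1 - i).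
  by rewrite [RHS]big_ord_recl /= !poch0.
rewrite [X in _ = X - _]big_ord_recr /= (@poch_negnat _ N N.+1) // !mul0r addr0.
rewrite -sumrB; apply: eq_bigr => r _.
have hr : (r <= N)%N by rewrite -ltnS.
rewrite subSS subSn // pochSl.
rewrite (pochS X r).
have -> : s + r%:R + 1 = s + 1 + r%:R by ring.
have -> : s + r.+1%:R = s + 1 + r%:R by rewrite -natr1; ring.
ring.
Qed.

Lemma poch_refl (z : C) (m : nat) : poch (1 - z - m%:R) m = (-1) ^+ m * poch z m.
Proof.
elim: m => [|m IH]; first by rewrite !poch0 expr0 mulr1.
rewrite pochSl (_ : 1 - z - m.+1%:R + 1 = 1 - z - m%:R); last by rewrite -natr1; ring.
rewrite IH pochS exprS -natr1; ring.
Qed.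

End Vand.

Section Main.
Variable C : numFieldType.
Variables al t s s' X Y : C.
Hypothesis hal : forall i : nat, al + i%:R != 0.
Hypothesis ht : forall i : nat, t + i%:R != 0.
Hypothesis hta : forall i : nat, t - al + i%:R != 0.
Hypothesis hs : forall i : nat, s + i%:R != 0.
Hypothesis hs' : forall i : nat, s' + i%:R != 0.
Hypothesis hsX : forall i : nat, s - X + i%:R != 0.
Hypothesis hsY : forall i : nat, s' - Y + i%:R != 0.
Variable k : nat.

Lemma VX (m : nat) (S Z : C) : (m <= k)%N ->
  poch Z m * poch (S - Z) (k - m) =
  \sum_(n < k.+1) vv C k m n * poch Z n * poch (S + n%:R) (k - n).
Proof.
move=> hm.
rewrite (_ : S - Z = (S + m%:R) - (Z + m%:R)); last by ring.
rewrite vandermonde mulr_sumr.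
set F := fun n => vv C k m n * poch Z n * poch (S + n%:R) (k - n).
rewrite -(big_mkord xpredT F) (big_cat_nat (leq0n m)) /=; last exact: (leq_trans hm (leqnSn k)).
have z : \sum_(0 <= i < m) F i = 0.
  rewrite big_nat_cond big1 // => i; rewrite andbT => /andP[_ hi].
  by rewrite /F vv_lt // !mul0r.
rewrite z add0r.
rewrite -[in RHS](add0n m) big_addn subSn // big_mkord; apply: eq_bigr => r _.
rewrite /F.
rewrite (addnC r m) vv_add poch_add natrB // opprB subnDA natrD addrA.
gen_poch; ring.
Qed.

Definition PX (S Z : C) (n : nat) : C := poch Z n / (poch al n * poch S n * n`!%:R).

Lemma sumPX (m : nat) (S Z : C) : (forall i : nat, S + i%:R != 0) -> (m <= k)%N ->
  \sum_(n < k.+1) hh C al k m n * PX S Z n = poch Z m * poch (S - Z) (k - m) / poch S k.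
Proof.
move=> hS hm; rewrite VX // mulr_suml; apply: eq_bigr => n _.
have hn : (n <= k)%N by rewrite -ltnS.
rewrite -[X in poch S X](subnKC hn) poch_add /hh /PX.
have h1 := @poch_neq0 _ _ n hS.
have h2 : poch (S + n%:R) (k - n) != 0.
  by apply: poch_neq0 => i; rewrite -addrA -natrD.
have h3 := @poch_neq0 _ _ n hal.
have h4 := @fact_neq0 C n.
gen_poch; field; by rewrite h1 h2 h3 h4.
Qed.

End Main.

Lemma triple (C : numFieldType) (K : nat) (w : nat -> C) (A B : nat -> nat -> C) :
  \sum_(j < K) w j * (\sum_(n < K) A n j) * (\sum_(p < K) B p j)
  = \sum_(n < K) \sum_(p < K) \sum_(j < K) w j * A n j * B p j.
Proof.
rewrite (eq_bigr (fun j : 'I_K => \sum_(n < K) \sum_(p < K) w j * A n j * B p j)); last first.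
  move=> j _; rewrite (mulr_sumr _ _ _ (w j)) mulr_suml; apply: eq_bigr => n _.
  by rewrite mulr_sumr.
rewrite exchange_big; apply: eq_bigr => n _.
by rewrite exchange_big.
Qed.

Section Main2.
Variable C : numFieldType.
Variables al t s s' X Y : C.
Hypothesis hal : forall i : nat, al + i%:R != 0.
Hypothesis ht : forall i : nat, t + i%:R != 0.
Hypothesis hta : forall i : nat, t - al + i%:R != 0.
Hypothesis hs : forall i : nat, s + i%:R != 0.
Hypothesis hs' : forall i : nat, s' + i%:R != 0.
Hypothesis hsX : forall i : nat, s - X + i%:R != 0.
Hypothesis hsY : forall i : nat, s' - Y + i%:R != 0.
Variable k : nat.

Lemma hypT_LHS (j : nat) (S Z : C) : (forall i : nat, S + i%:R != 0) -> (j <= k)%N ->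
  hypT j [:: j%:R + t - 1; Z] [:: al; S] 1 = \sum_(n < k.+1) ee C t n j * @PX C al S Z n.
Proof.
move=> hS hj; rewrite /hypT (big_ord_widen k.+1 _ (hj : j.+1 <= k.+1)%N) big_mkcond.
apply: eq_bigr => n _; case: ifP => hn.
  rewrite /hyp_term !big_cons !big_nil expr1n /ee /PX.
  have -> : j%:R + t - 1 = t + j%:R - 1 by ring.
  have h1 := @poch_neq0 _ _ n hal.
  have h2 := @poch_neq0 _ _ n hS.
  have h3 := @fact_neq0 C n.
  gen_poch; field; by rewrite h1 h2 h3.
by rewrite ee_zero ?mul0r // ltnNge -ltnS hn.
Qed.

Local Notation PXs := (@PX C al s X).
Local Notation PYs := (@PX C al s' Y).

Lemma LHS_eq (I : C) (hI : I * I = -1) :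
  \sum_(j < k.+1)
     (poch (- k%:R) j * poch t (2 * j) * (j`!)%:R
      / (poch al j * poch (t - al) j * poch (t + j%:R - 1) j
         * poch s j * poch s' j * poch (t + k%:R) j))
     * (I ^+ j * poch al j * poch s j / (j`!)%:R * hypT j [:: j%:R + t - 1; X] [:: al; s] 1)
     * (I ^+ j * poch al j * poch s' j / (j`!)%:R * hypT j [:: j%:R + t - 1; Y] [:: al; s'] 1)
  = \sum_(n < k.+1) \sum_(p < k.+1) PXs n * PYs p * GG C al t k n p.
Proof.
rewrite (eq_bigr (fun j : 'I_k.+1 => ww C al t k j * (\sum_(n < k.+1) ee C t n j * PXs n)
     * (\sum_(p < k.+1) ee C t p j * PYs p))); last first.
  move=> j _; have hj : (j <= k)%N by rewrite -ltnS.
  rewrite !hypT_LHS //.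
  set SX := \sum_(n < k.+1) _ * PXs n. set SY := \sum_(n < k.+1) _ * PYs n.
  have hIj : I ^+ j * I ^+ j = (-1) ^+ j by rewrite -exprMn hI.
  rewrite /ww -hIj.
  have h1 := @poch_neq0 _ _ j hal.
  have h2 := @poch_neq0 _ _ j hta.
  have h3 := @ht1 C t ht j.
  have h4 := @poch_neq0 _ _ j hs.
  have h5 := @poch_neq0 _ _ j hs'.
  have h6 : poch (t + k%:R) j != 0 by apply: poch_neq0 => i; rewrite -addrA -natrD.
  have h7 := @fact_neq0 C j.
  gen_poch; field; by rewrite h1 h2 h3 h4 h5 h6 h7.
rewrite (@triple C k.+1 (fun j => ww C al t k j) (fun n j => ee C t n j * PXs n) (fun p j => ee C t p j * PYs p)).
apply: eq_bigr => n _; apply: eq_bigr => p _.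
rewrite /GG mulr_sumr; apply: eq_bigr => j _; ring.
Qed.

Lemma sign2 (m : nat) : ((-1) ^+ m * (-1) ^+ m : C) = 1.
Proof. by rewrite -exprMn mulrNN mulr1 expr1n. Qed.

Lemma split_refl (S Z : C) (m : nat) : (forall i : nat, S - Z + i%:R != 0) -> (m <= k)%N ->
  poch (S - Z) k / poch (1 - k%:R - S + Z) m = (-1) ^+ m * poch (S - Z) (k - m).
Proof.
move=> hSZ hm.
have -> : 1 - k%:R - S + Z = 1 - (S - Z + (k - m)%:R) - m%:R by rewrite natrB //; ring.
rewrite poch_refl -[e in poch (S - Z) e](subnK hm) poch_add.
have h1 : poch (S - Z + (k - m)%:R) m != 0 by apply: poch_neq0 => i; rewrite -addrA -natrD.
have h2 : ((-1) ^+ m : C) != 0 by rewrite expf_neq0 // oppr_eq0 oner_eq0.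
have hs2 := sign2 m.
transitivity (((-1) ^+ m * (-1) ^+ m) * (poch (S - Z) (k - m) * poch (S - Z + (k - m)%:R) m)
   / ((-1) ^+ m * poch (S - Z + (k - m)%:R) m)); first by rewrite hs2 mul1r.
move: h1; gen_poch => h1; field; by rewrite h1 h2.
Qed.

Lemma RHS_eq :
  poch (s - X) k * poch (s' - Y) k * poch t k / (poch s k * poch s' k * poch (t - al) k)
  * hypT k [:: 1 - k%:R - (t - al); X; Y] [:: al; 1 - k%:R - s + X; 1 - k%:R - s' + Y] 1
  = \sum_(n < k.+1) \sum_(p < k.+1) PXs n * PYs p * HH C al t k n p.
Proof.
rewrite /hypT mulr_sumr.
rewrite (eq_bigr (fun m : 'I_k.+1 => TT C al t k * bb C al t k m
    * (\sum_(n < k.+1) hh C al k m n * PXs n) * (\sum_(p < k.+1) hh C al k m p * PYs p))); last first.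
  move=> m _; have hm : (m <= k)%N by rewrite -ltnS.
  rewrite !sumPX //.
  rewrite /hyp_term !big_cons !big_nil expr1n /TT /bb.
  have -> : 1 - k%:R - (t - al) = 1 - k%:R - t + al by ring.
  have e1 := split_refl _ _ _ hsX hm.
  have e2 := split_refl _ _ _ hsY hm.
  have hs2 := sign2 m.
  have h1 := @poch_neq0 _ _ m hal.
  have h2 : poch (1 - k%:R - s + X) m != 0.
    apply/eqP => h0; move: e1; rewrite h0 invr0 mulr0 => /esym/eqP.
    rewrite mulf_eq0 expf_eq0 oppr_eq0 oner_eq0 andbF /=.
    by apply/negP; apply: poch_neq0.
  have h3 : poch (1 - k%:R - s' + Y) m != 0.
    apply/eqP => h0; move: e2; rewrite h0 invr0 mulr0 => /esym/eqP.
    rewrite mulf_eq0 expf_eq0 oppr_eq0 oner_eq0 andbF /=.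
    by apply/negP; apply: poch_neq0.
  have h4 := @poch_neq0 _ _ k hs.
  have h5 := @poch_neq0 _ _ k hs'.
  have h6 := @poch_neq0 _ _ k hta.
  have h7 := @fact_neq0 C m.
  move: e1 e2 hs2 h1 h2 h3 h4 h5 h6 h7; gen_poch => e1 e2 hs2 h1 h2 h3 h4 h5 h6 h7.
  transitivity (P9 / (P6 * P7 * P8) * (P10 * P11 * P12 * P13 / (P5 * m`!%:R)) * (P / P0) * (P2 / P3)).
    field; by rewrite h1 h2 h3 h4 h5 h6 h7.
  rewrite e1 e2.
  transitivity (((-1) ^+ m * (-1) ^+ m) * (P9 / (P6 * P7 * P8) * (P10 * P11 * P12 * P13 / (P5 * m`!%:R)) * P1 * P4)).
    by ring.
  rewrite hs2 mul1r; field; by rewrite h1 h4 h5 h6 h7.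
rewrite (@triple C k.+1 (fun m => TT C al t k * bb C al t k m) (fun n m => hh C al k m n * PXs n) (fun p m => hh C al k m p * PYs p)).
apply: eq_bigr => n _; apply: eq_bigr => p _.
rewrite /HH mulrA mulr_sumr; apply: eq_bigr => j _; ring.
Qed.

Lemma abstract_main (I u : C) (hI : I * I = -1) (hu : u = t - al) :
  \sum_(j < k.+1)
     (poch (- k%:R) j * poch t (2 * j) * (j`!)%:R
      / (poch al j * poch u j * poch (t + j%:R - 1) j
         * poch s j * poch s' j * poch (t + k%:R) j))
     * (I ^+ j * poch al j * poch s j / (j`!)%:R * hypT j [:: j%:R + t - 1; X] [:: al; s] 1)
     * (I ^+ j * poch al j * poch s' j / (j`!)%:R * hypT j [:: j%:R + t - 1; Y] [:: al; s'] 1)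
  = poch (s - X) k * poch (s' - Y) k * poch t k / (poch s k * poch s' k * poch u k)
  * hypT k [:: 1 - k%:R - u; X; Y] [:: al; 1 - k%:R - s + X; 1 - k%:R - s' + Y] 1.
Proof.
subst u; rewrite LHS_eq // RHS_eq.
apply: eq_bigr => n _; apply: eq_bigr => p _.
by rewrite GH.
Qed.
End Main2.

Local Open Scope complex_scope.

Section Cx.
Variable R : rcfType.

Lemma ReD (z w : R[i]) : complex.Re (z + w) = complex.Re z + complex.Re w.
Proof. by case: z; case: w. Qed.

Lemma ReN (z : R[i]) : complex.Re (- z) = - complex.Re z.
Proof. by case: z. Qed.

Lemma Re_nat (n : nat) : complex.Re (n%:R : R[i]) = n%:R.
Proof. elim: n => [//|n IH]; by rewrite -!natr1 ReD IH. Qed.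

Lemma Re_real (r : R) : complex.Re (r%:C) = r.
Proof. by []. Qed.

Lemma Re_iC (r : R) : complex.Re ('i * r%:C) = 0.
Proof. by rewrite /= !mul0r !mul1r subrr. Qed.

Lemma Re_2 (z : R[i]) : complex.Re (2 * z) = 2 * complex.Re z.
Proof. by case: z => a b /=; ring. Qed.

Lemma Re_pos_neq0 (z : R[i]) : 0 < complex.Re z -> forall i : nat, z + i%:R != 0.
Proof.
move=> h i; apply/eqP => e.
have : complex.Re (z + i%:R) = 0 by rewrite e.
rewrite ReD Re_nat => e2.
have : 0 < complex.Re z + i%:R by rewrite ltr_wpDr // ler0n.
by rewrite e2 ltxx.
Qed.
End Cx.

Theorem corollary2p5 (R : rcfType) (a : R) (b d b' d' : R[i]) (x y : R) (k : nat) :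
  0 < a ->
  0 < complex.Re b -> 0 < complex.Re d -> 0 < complex.Re b' -> 0 < complex.Re d' ->
  b + d = b' + d' -> d^* = b -> d'^* = b' ->
  let A := a%:C in
  \sum_(j < k.+1)
     (poch (- k%:R) j * poch (2 * A + b + d) (2 * j) * (j`!)%:R
      / (poch (2 * A) j * poch (b + d) j * poch (2 * A + b + d + j%:R - 1) j
         * poch (A + d) j * poch (A + d') j * poch (2 * A + b + d + k%:R) j))
     * cHahn j x A b A d * cHahn j y A b' A d'
  = poch (d - iC * x%:C) k * poch (d' - iC * y%:C) k * poch (2 * A + b + d) k
      / (poch (A + d) k * poch (A + d') k * poch (b + d) k)
    * hypT k [:: 1 - k%:R - b - d; A + iC * x%:C; A + iC * y%:C]
             [:: 2 * A; 1 - k%:R - d + iC * x%:C; 1 - k%:R - d' + iC * y%:C] 1.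
Proof.
move=> ha hb hd hb' hd' hbd _ _ A.
have hA : complex.Re A = a by [].
set X := A + 'i * x%:C.
set Y := A + 'i * y%:C.
rewrite (eq_bigr (fun j : 'I_k.+1 =>
     (poch (- k%:R) j * poch (2 * A + b + d) (2 * j) * (j`!)%:R
      / (poch (2 * A) j * poch (b + d) j * poch (2 * A + b + d + j%:R - 1) j
         * poch (A + d) j * poch (A + d') j * poch (2 * A + b + d + k%:R) j))
     * ('i ^+ j * poch (2 * A) j * poch (A + d) j / (j`!)%:R
         * hypT j [:: j%:R + (2 * A + b + d) - 1; X] [:: 2 * A; A + d] 1)
     * ('i ^+ j * poch (2 * A) j * poch (A + d') j / (j`!)%:R
         * hypT j [:: j%:R + (2 * A + b + d) - 1; Y] [:: 2 * A; A + d'] 1))); last first.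
  move=> j _; rewrite /cHahn.
  have e1 : A + A = 2 * A by ring.
  have e2 : j%:R + A + b + A + d - 1 = j%:R + (2 * A + b + d) - 1 by ring.
  have e3 : j%:R + A + b' + A + d' - 1 = j%:R + (2 * A + b + d) - 1.
    transitivity (j%:R + 2 * A + (b' + d') - 1); first by ring.
    by rewrite -hbd; ring.
  by rewrite e2 e3 e1.
have pos2 : (0 : R) < 2 by [].
have hal : forall i : nat, 2 * A + i%:R != 0.
  by apply: Re_pos_neq0; rewrite Re_2 hA mulr_gt0.
have ht : forall i : nat, 2 * A + b + d + i%:R != 0.
  apply: Re_pos_neq0; rewrite !ReD Re_2 hA.
  by rewrite addr_gt0 // addr_gt0 // mulr_gt0.
have hta : forall i : nat, 2 * A + b + d - 2 * A + i%:R != 0.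
  have -> : 2 * A + b + d - 2 * A = b + d by ring.
  by apply: Re_pos_neq0; rewrite ReD addr_gt0.
have hs : forall i : nat, A + d + i%:R != 0.
  by apply: Re_pos_neq0; rewrite ReD hA addr_gt0.
have hs' : forall i : nat, A + d' + i%:R != 0.
  by apply: Re_pos_neq0; rewrite ReD hA addr_gt0.
have hsX : forall i : nat, A + d - X + i%:R != 0.
  have -> : A + d - X = d - 'i * x%:C by rewrite /X; ring.
  by apply: Re_pos_neq0; rewrite ReD ReN Re_iC oppr0 addr0.
have hsY : forall i : nat, A + d' - Y + i%:R != 0.
  have -> : A + d' - Y = d' - 'i * y%:C by rewrite /Y; ring.
  by apply: Re_pos_neq0; rewrite ReD ReN Re_iC oppr0 addr0.
have hI : ('i : R[i]) * 'i = -1 by rewrite -expr2 sqr_i.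
have hu : b + d = 2 * A + b + d - 2 * A by ring.
rewrite (@abstract_main _ (2 * A) (2 * A + b + d) (A + d) (A + d') X Y hal ht hta hs hs' hsX hsY k 'i (b + d) hI hu).
rewrite /iC /X /Y.
congr (poch _ k * poch _ k * _ / (_ * _ * _) * hypT _ [:: _; _; _] [:: _; _; _] _).
- have g : A + d - (A + 'i * x%:C) = d - 'i * x%:C :> R[i] by ring.
  exact: g.
- have g : A + d' - (A + 'i * y%:C) = d' - 'i * y%:C :> R[i] by ring.
  exact: g.
  have g : 1 - k%:R - (b + d) = 1 - k%:R - b - d :> R[i] by ring.
  exact: g.
- have g : 1 - k%:R - (A + d) + (A + 'i * x%:C) = 1 - k%:R - d + 'i * x%:C :> R[i] by ring.
  exact: g.
- have g : 1 - k%:R - (A + d') + (A + 'i * y%:C) = 1 - k%:R - d' + 'i * y%:C :> R[i] by ring.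
  exact: g.
Qed.
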